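(* Let $\Lambda=(V,\pi,v,\le)$ be a bi-colored weighted ordered vertex with $r(\Lambda)=2$, identify $V=\{1,\dots,l\}$ via $\le$, and suppose $V_\bullet=\{a,b\}$ with $b-a\ge3$. Then $$\sum_{(E,s,t)\in\mathcal{E}(\Lambda)}(-1)^{|E_{\bullet\to\circ}|}\prod_{e\in E}v(s(e))v(t(e))=0.$$
   Context: A bi-colored weighted ordered vertex is $\Lambda=(V,\pi,v,\le)$ with $V$ a finite set, $\pi\colon V\to\{\bullet,\circ\}$, $v\colon V\to\mathbb{Z}_{\ge1}$, $\le$ a total order on $V$; $V_\bullet=\pi^{-1}(\bullet)$, $r(\Lambda)=\sum_{i\in V_\bullet}v(i)$. $\mathcal{E}(\Lambda)$ is the set of data $(E,s,t)$ with $E$ a finite set and $s,t\colon E\to V$, such that the quiver $(V,E,s,t)$ has connected and simply connected geometric realization, $\pi s(e)\ne\pi t(e)$ and $s(e)<t(e)$ for all $e\in E$. $E_{\bullet\to\circ}=\{e\in E:\pi s(e)=\bullet\}$. *)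

(* Defs.v *)
From mathcomp Require Import all_boot all_order all_algebra.
From mathcomp Require Import boolp.
Set Implicit Arguments. Unset Strict Implicit. Unset Printing Implicit Defensive.

(* A bi-colored weighted ordered vertex with l vertices is encoded by
   V = 'I_l (the total order <= of V is the order of 'I_l),
   pi : 'I_l -> bool  with  pi i = true  iff  i is black (bullet),
   v  : 'I_l -> nat   with  v i >= 1.
   A datum (E,s,t) of E(Lambda) is (up to isomorphism over V) an edge set
   F : {set 'I_l * 'I_l}, an edge e being the pair (s e, t e). *)

Definition qadj (l : nat) (F : {set 'I_l * 'I_l}) : rel 'I_l :=
  fun x y => ((x, y) \in F) || ((y, x) \in F).

Definition qconnected (l : nat) (F : {set 'I_l * 'I_l}) : Prop :=
  forall x y : 'I_l, connect (qadj F) x y.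

(* geometric realization has no cycle (simply connected): no closed walk
   through >= 3 pairwise distinct vertices (loops and multiple edges cannot
   occur since edges are distinct pairs (s,t) with s < t). *)
Definition qacyclic (l : nat) (F : {set 'I_l * 'I_l}) : Prop :=
  forall c : seq 'I_l, uniq c -> 2 < size c -> ~~ cycle (qadj F) c.

Definition inE_Lambda (l : nat) (pi : 'I_l -> bool) (F : {set 'I_l * 'I_l}) : Prop :=
  [/\ qconnected F, qacyclic F &
      forall e, e \in F -> pi e.1 != pi e.2 /\ (e.1 < e.2)%N].

Definition rLambda (l : nat) (pi : 'I_l -> bool) (v : 'I_l -> nat) : nat :=
  \sum_(i : 'I_l | pi i) v i.

Definition E_sum (l : nat) (pi : 'I_l -> bool) (v : 'I_l -> nat) : int :=
  (\sum_(F : {set 'I_l * 'I_l} | `[< inE_Lambda pi F >])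
     (-1) ^+ #|[set e in F | pi e.1]| *
     (\prod_(e in F) (v e.1 * v e.2)%N)%:Z)%R.

(* Main.v *)
Require Import Defs.
From mathcomp Require Import all_boot all_order all_algebra.
From mathcomp Require Import boolp zify.
Set Implicit Arguments. Unset Strict Implicit.
Import GRing.Theory.

Lemma leaf_notin (T : eqType) (e : rel T) x p y s :
  (forall z, e x z = (z == p)) -> (forall u v, e u v = e v u) ->
  path e y s -> uniq (y :: s) -> y != x -> last y s != x -> x \notin (y :: s).
Proof.
move=> hx hs pth uq yx lx.
rewrite inE eq_sym (negbTE yx) /=; apply/negP => xs.
move: pth uq lx; case/splitPr: xs => s1 s2.
rewrite cat_path last_cat /= => /and3P [_ e1 pth2] uq.
case: s2 pth2 uq => [|z s2] /=; first by rewrite eqxx.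
move=> /andP [ez _] uq _.
rewrite hx in ez; rewrite hs hx in e1.
have : uniq ((y :: s1) ++ (x :: z :: s2)) by [].
rewrite cat_uniq => /and3P [_ /hasPn H _].
have := H z; rewrite !inE eqxx orbT => /(_ isT).
rewrite (eqP ez) -(eqP e1); by move/negP; apply; apply: mem_last.
Qed.

Lemma connect_avoid (T : finType) (e e' : rel T) x p y z :
  (forall w, e x w = (w == p)) -> (forall u v, e u v = e v u) ->
  (forall u v, u != x -> v != x -> e u v -> e' u v) ->
  y != x -> z != x -> connect e y z -> connect e' y z.
Proof.
move=> hx hs h1 yx zx /connectP [s pth zE]; subst z.
case/shortenP: pth zx => s' pth' uq' _ lx.
have nin := leaf_notin hx hs pth' uq' yx lx.
apply/connectP; exists s' => //.
apply: (@sub_in_path _ (fun w => w != x)) pth'.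
  by move=> u v ux vx; apply: h1.
by apply/allP => w wi; apply/negP => /eqP wx; rewrite -wx wi in nin.
Qed.

Lemma qadjC l (F : {set 'I_l * 'I_l}) u v : qadj F u v = qadj F v u.
Proof. by rewrite /qadj orbC. Qed.

Lemma swap_valid l (pi : 'I_l -> bool) (F F' : {set 'I_l * 'I_l}) x p q :
  inE_Lambda pi F ->
  (forall e, e \in F' -> pi e.1 != pi e.2 /\ (e.1 < e.2)%N) ->
  (forall w, qadj F x w = (w == p)) -> (forall w, qadj F' x w = (w == q)) ->
  (forall u v, u != x -> v != x -> qadj F' u v = qadj F u v) ->
  p != x -> q != x ->
  inE_Lambda pi F'.
Proof.
move=> [conF acF _] ec hF hF' h1 px qx.
have av : forall u v, u != x -> v != x -> connect (qadj F') u v.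
  move=> u v ux vx; apply: (connect_avoid hF (@qadjC l F)) => //.
  by move=> u' v' u'x v'x; rewrite h1.
have qx' : connect (qadj F') q x by apply: connect1; rewrite qadjC hF'.
have xq' : connect (qadj F') x q by apply: connect1; rewrite hF'.
split => //.
- move=> u v.
  have [->|ux] := eqVneq u x; have [->|vx] := eqVneq v x => //.
  + exact: (connect_trans xq' (av _ _ qx vx)).
  + exact: (connect_trans (av _ _ ux qx) qx').
  + exact: av.
- move=> c uc sc; apply/negP => cc.
  have [xc|xc] := boolP (x \in c).
    case: (rot_to xc) => i s' E.
    have : cycle (qadj F') (x :: s') by rewrite -E rot_cycle.
    have : uniq (x :: s') by rewrite -E rot_uniq.
    have : 2 < size (x :: s') by rewrite -E size_rot.
    case: s' {E} => [|y [|z r]] //= _.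
    rewrite rcons_path /= => /and3P [_ yr _] /and3P [exy _ elx].
    rewrite hF' in exy; rewrite qadjC hF' in elx; move/andP: elx => [_ elx].
    move: yr; rewrite (eqP exy) -(eqP elx) inE.
    by move: (mem_last z r); rewrite inE => ->.
  have : cycle (qadj F) c.
    apply: (@sub_in_cycle _ (fun w => w != x) (qadj F')) cc.
      by move=> u v ux vx; rewrite h1.
    by apply/allP => w wi; apply/negP => /eqP wx; rewrite -wx wi in xc.
  by apply/negP; apply: acF.
Qed.

Definition EC l (pi : 'I_l -> bool) (F : {set 'I_l * 'I_l}) :=
  forall e, e \in F -> pi e.1 != pi e.2 /\ (e.1 < e.2)%N.

Lemma nbr_white l (pi : 'I_l -> bool) (a b x : 'I_l) F :
  (forall i, pi i = (i == a) || (i == b)) -> (a < x)%N -> (x < b)%N ->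
  EC pi F -> forall y,
  qadj F x y = (((a, x) \in F) && (y == a)) || (((x, b) \in F) && (y == b)).
Proof.
move=> hpi hax hxb ec y.
have pix : pi x = false.
  by rewrite hpi; apply/negbTE; rewrite negb_or -!val_eqE /=;
     apply/andP; split; apply/eqP => E; move: hax hxb; rewrite E ltnn.
apply/idP/idP.
- rewrite /qadj /=; case/orP => H; have [/= ne lt] := ec _ H;
  have : pi y by move: ne; rewrite pix; case: (pi y).
  + rewrite hpi; case/orP => /eqP E; subst y.
      by move: (ltn_trans lt hax); rewrite ltnn.
    by rewrite H eqxx orbT.
  + rewrite hpi; case/orP => /eqP E; subst y.
      by rewrite H eqxx.
    by move: (ltn_trans hxb lt); rewrite ltnn.
- by rewrite /qadj /=; case/orP => /andP [h /eqP ->]; rewrite h ?orbT.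
Qed.

Module M3.
Local Open Scope ring_scope.


Lemma summand_prod (T : finType) (P : pred T) (F : {set T}) (g : T -> nat) :
  (-1) ^+ #|[set e in F | P e]| * (\prod_(e in F) g e)%N%:Z =
  \prod_(e in F) ((if P e then -1 else 1) * (g e)%:Z) :> int.
Proof.
rewrite big_split /= -big_mkcondr.
rewrite (big_morph Posz PoszM (erefl 1%:Z)); congr (_ * _).
rewrite -prodr_const; apply: eq_bigl => e; rewrite !inE.
by [].
Qed.

Lemma prod_swap (T : finType) (F F' : {set T}) z z' (h : T -> int) :
  z \in F -> z' \in F' -> (forall e, (e \in F) && (e != z) = (e \in F') && (e != z')) ->
  h z' = - h z -> \prod_(e in F') h e = - \prod_(e in F) h e.
Proof.
move=> zF zF' H hz.
rewrite (bigD1 z' zF') (bigD1 z zF) /= hz mulNr; congr (- (_ * _)).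
by apply: eq_bigl => e; rewrite H.
Qed.

End M3.
Import M3.

Definition tog l (F S : {set 'I_l * 'I_l}) : {set 'I_l * 'I_l} :=
  [set e | (e \in F) != (e \in S)].
Definition S2 l (a b x : 'I_l) : {set 'I_l * 'I_l} := [set (a, x); (x, b)].
Definition xsel l (a b c1 c2 : 'I_l) (F : {set 'I_l * 'I_l}) :=
  if ((a, c1) \in F) && ((c1, b) \in F) then c2 else c1.
Definition cnd l (a b x : 'I_l) (F : {set 'I_l * 'I_l}) :=
  ((a, x) \in F) != ((x, b) \in F).
Definition sig l (a b c1 c2 : 'I_l) (F : {set 'I_l * 'I_l}) :=
  if cnd a b (xsel a b c1 c2 F) F then tog F (S2 a b (xsel a b c1 c2 F)) else F.

Lemma tog_in l (F S : {set 'I_l * 'I_l}) e : (e \in tog F S) = ((e \in F) != (e \in S)).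
Proof. by rewrite /tog in_set. Qed.
Lemma in_S2 l (a b x : 'I_l) e : (e \in S2 a b x) = (e == (a, x)) || (e == (x, b)).
Proof. by rewrite !inE. Qed.
Lemma togK l (F S : {set 'I_l * 'I_l}) : tog (tog F S) S = F.
Proof. by apply/setP => e; rewrite !tog_in; case: (e \in F); case: (e \in S). Qed.

Lemma sig_key l (a b c1 c2 : 'I_l) : a != c1 -> a != c2 -> c1 != c2 -> c1 != b -> c2 != b ->
  forall F, cnd a b (xsel a b c1 c2 F) F ->
  xsel a b c1 c2 (tog F (S2 a b (xsel a b c1 c2 F))) = xsel a b c1 c2 F /\
  cnd a b (xsel a b c1 c2 F) (tog F (S2 a b (xsel a b c1 c2 F))).
Proof.
move=> h1 h2 h3 h4 h5 F.
have e1 : (c1 == c2) = false by apply/negbTE.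
have e2 : (a == c2) = false by apply/negbTE.
have e3 : (c1 == a) = false by rewrite eq_sym; apply/negbTE.
have e4 : (b == c2) = false by rewrite eq_sym; apply/negbTE.
have e5 : (c2 == a) = false by rewrite eq_sym; apply/negbTE.
have e6 : (b == c1) = false by rewrite eq_sym; apply/negbTE.
have e7 : (c1 == b) = false by apply/negbTE.
have e8 : (c2 == b) = false by apply/negbTE.
rewrite /xsel /cnd; case h: (((a, c1) \in F) && ((c1, b) \in F));
  rewrite !tog_in !in_S2 !xpair_eqE !eqxx ?e1 ?e2 ?e3 ?e4 ?e5 ?e6 ?e7 ?e8 /=;
  move: h; case: ((a, c1) \in F); case: ((c1, b) \in F);
  case: ((a, c2) \in F); case: ((c2, b) \in F) => //=.
Qed.


Lemma sig_inv l (a b c1 c2 : 'I_l) : a != c1 -> a != c2 -> c1 != c2 -> c1 != b -> c2 != b ->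
  forall F, sig a b c1 c2 (sig a b c1 c2 F) = F.
Proof.
move=> h1 h2 h3 h4 h5 F.
case c: (cnd a b (xsel a b c1 c2 F) F).
  have [k1 k2] := sig_key h1 h2 h3 h4 h5 c.
  by rewrite {2}/sig c /sig k1 k2 togK.
by rewrite /sig !c.
Qed.

Lemma has_nbr l (pi : 'I_l -> bool) F (x a : 'I_l) :
  inE_Lambda pi F -> x != a -> exists y, qadj F x y.
Proof.
move=> [conF _ _] xa; have /connectP [s pth aE] := conF x a.
case: s pth aE => [|y s] /=; first by move=> _ E; rewrite E eqxx in xa.
by move=> /andP [xy _] _; exists y.
Qed.

Lemma ord_neq l (u w : 'I_l) : (u < w)%N -> u != w.
Proof. by move=> h; apply/eqP => E; rewrite E ltnn in h. Qed.

Lemma cnd_valid l (pi : 'I_l -> bool) (a b c1 c2 : 'I_l) F :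
  (forall i, pi i = (i == a) || (i == b)) ->
  (a < c1)%N -> (c1 < c2)%N -> (c2 < b)%N ->
  inE_Lambda pi F -> cnd a b (xsel a b c1 c2 F) F.
Proof.
move=> hpi h1 h2 h3 V.
have ec : EC pi F by case: V.
have one : forall x : 'I_l, (a < x)%N -> (x < b)%N ->
    ((a, x) \in F) || ((x, b) \in F).
  move=> x ax xb; have xa : x != a by rewrite eq_sym ord_neq.
  have [y] := has_nbr V xa.
  rewrite (nbr_white hpi ax xb ec).
  by case/orP => /andP [-> _]; rewrite ?orbT.
have h13 : (a < c2)%N := ltn_trans h1 h2.
have h23 : (c1 < b)%N := ltn_trans h2 h3.
rewrite /xsel /cnd; case h: (((a, c1) \in F) && ((c1, b) \in F)).
  have := one _ h13 h3.
  case e1: ((a, c2) \in F); case e2: ((c2, b) \in F) => //= _.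
  case: V => _ acF _.
  have := acF [:: a; c1; b; c2].
  rewrite /= !inE !negb_or (ord_neq h1) (ord_neq h13) (ord_neq (ltn_trans h1 h23)).
  rewrite (ord_neq h23) (ord_neq h2) eq_sym (ord_neq h3) /=.
  move/andP: h => [f1 f2].
  by rewrite /qadj /= f1 f2 e1 e2 /= ?orbT => /(_ isT isT).
have := one _ h1 h23.
by move: h; case: ((a, c1) \in F); case: ((c1, b) \in F).
Qed.

Definition summ l (pi : 'I_l -> bool) (v : 'I_l -> nat) (F : {set 'I_l * 'I_l}) : int :=
  ((-1) ^+ #|[set e in F | pi e.1]| *
     (\prod_(e in F) (v e.1 * v e.2)%N)%:Z)%R.

Lemma sig_props l (pi : 'I_l -> bool) (v : 'I_l -> nat) (a b c1 c2 : 'I_l) F :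
  (forall i, pi i = (i == a) || (i == b)) ->
  (a < c1)%N -> (c1 < c2)%N -> (c2 < b)%N -> v a = 1%N -> v b = 1%N ->
  inE_Lambda pi F ->
  inE_Lambda pi (sig a b c1 c2 F) /\ summ pi v (sig a b c1 c2 F) = (- summ pi v F)%R.
Proof.
move=> hpi h1 h2 h3 va vb V.
have c := cnd_valid hpi h1 h2 h3 V.
rewrite /sig c; move: c.
have : (a < xsel a b c1 c2 F < b)%N.
  rewrite /xsel; case: ifP => _; apply/andP; split => //.
  - exact: ltn_trans h1 h2.
  - exact: ltn_trans h2 h3.
set x := xsel a b c1 c2 F => /andP [ax xb] c.
have ec : EC pi F by case: V.
have pix : pi x = false.
  by rewrite hpi (negbTE (ord_neq xb)) eq_sym (negbTE (ord_neq ax)).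
have pia : pi a by rewrite hpi eqxx.
have pib : pi b by rewrite hpi eqxx orbT.
set F' := tog F (S2 a b x).
have axb : ((a, x) == (x, b)) = false.
  by rewrite xpair_eqE (negbTE (ord_neq ax)).
have m1 : ((a, x) \in F') = ~~ ((a, x) \in F).
  by rewrite tog_in in_S2 eqxx /=; case: ((a, x) \in F).
have m2 : ((x, b) \in F') = ~~ ((x, b) \in F).
  by rewrite tog_in in_S2 eqxx orbT; case: ((x, b) \in F).
have ec' : EC pi F'.
  move=> e; rewrite tog_in in_S2.
  case eF: (e \in F) => /=.
    by case: ((e == (a, x)) || (e == (x, b))) => //= _; apply: ec.
  case: (eqVneq e (a, x)) => [-> _|ne1]; first by rewrite /= pia pix.
  case: (eqVneq e (x, b)) => [-> _|ne2]; first by rewrite /= pib pix.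
  by [].
have H1 : forall u w, u != x -> w != x -> qadj F' u w = qadj F u w.
  move=> u w ux wx; rewrite /qadj /= !tog_in !in_S2 !xpair_eqE (negbTE ux) (negbTE wx).
  by case: (u == a); case: (w == b); case: (w == a); case: (u == b);
     case: ((u, w) \in F); case: ((w, u) \in F).
have ax' : a != x := ord_neq ax.
have bx' : b != x by rewrite eq_sym; exact: ord_neq xb.
have nF := nbr_white hpi ax xb ec.
have nF' := nbr_white hpi ax xb ec'.
rewrite m1 m2 in nF'.
rewrite /summ !summand_prod.
have hax : ((if pi (a, x).1 then -1 else 1) * (v (a, x).1 * v (a, x).2)%:Z)%R
        = (- (v x)%:Z)%R by rewrite /= pia va mul1n mulN1r.
have hxb : ((if pi (x, b).1 then -1 else 1) * (v (x, b).1 * v (x, b).2)%:Z)%R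
        = ((v x)%:Z)%R by rewrite /= pix vb muln1 mul1r.
move: c nF nF' m1 m2; rewrite /cnd.
case A: ((a, x) \in F); case B: ((x, b) \in F) => //= _ nF nF' m1 m2.
- split.
    apply: (swap_valid V ec' (p := a) (q := b)) => //;
      move=> w; rewrite ?nF ?nF'; by case: (w == a); case: (w == b).
  apply: (@prod_swap _ F F' (a, x) (x, b)) => //; last by rewrite /= pia pix va vb mul1n muln1 mul1r mulN1r opprK.
  move=> e; have [->|ne1] := eqVneq e (a, x); first by rewrite A m1 ?eqxx.
  have [->|ne2] := eqVneq e (x, b); first by rewrite B m2 ?eqxx.
  by rewrite tog_in in_S2 (negbTE ne1) (negbTE ne2) /= !andbT; case: (e \in F).
- split.
    apply: (swap_valid V ec' (p := b) (q := a)) => //;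
      move=> w; rewrite ?nF ?nF'; by case: (w == a); case: (w == b).
  apply: (@prod_swap _ F F' (x, b) (a, x)) => //; last by rewrite /= pia pix va vb mul1n muln1 mul1r mulN1r.
  move=> e; have [->|ne1] := eqVneq e (a, x); first by rewrite A m1 ?eqxx.
  have [->|ne2] := eqVneq e (x, b); first by rewrite B m2 ?eqxx.
  by rewrite tog_in in_S2 (negbTE ne1) (negbTE ne2) /= !andbT; case: (e \in F).
Qed.

Theorem lemma4p13 (l : nat) (pi : 'I_l -> bool) (v : 'I_l -> nat)
  (a b : 'I_l)
  (hv : forall i, (0 < v i)%N)
  (hr : rLambda pi v = 2%N)
  (hblack : [set i | pi i] = [set a; b])
  (hab : (3 <= b - a)%N) :
  E_sum pi v = 0%R.
Proof.
have hpi : forall i, pi i = (i == a) || (i == b).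
  by move=> i; have := congr1 (fun S : {set 'I_l} => i \in S) hblack; rewrite /= !inE.
have hab' : (a + 3 <= b)%N by lia.
have ab : a != b by apply: ord_neq; lia.
have [va vb] : v a = 1%N /\ v b = 1%N.
  move: hr; rewrite /rLambda (bigD1 a) ?hpi ?eqxx //= (bigD1 b) /=; last first.
    by rewrite hpi eqxx orbT eq_sym ab.
  by have := hv a; have := hv b; lia.
have lc1 : (a.+1 < l)%N by have := ltn_ord b; lia.
have lc2 : (a.+2 < l)%N by have := ltn_ord b; lia.
pose c1 : 'I_l := Ordinal lc1.
pose c2 : 'I_l := Ordinal lc2.
have h1 : (a < c1)%N by rewrite /= leqnn.
have h2 : (c1 < c2)%N by rewrite /= leqnn.
have h3 : (c2 < b)%N by rewrite /=; lia.
have inv := sig_inv (ord_neq h1) (ord_neq (ltn_trans h1 h2)) (ord_neq h2)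
   (ord_neq (ltn_trans h2 h3)) (ord_neq h3).
have E : E_sum pi v = (- E_sum pi v)%R.
  rewrite /E_sum {1}(reindex_inj (can_inj inv)) /= -sumrN.
  apply: eq_big => F.
    apply/asboolP/asboolP => V.
      by have := (sig_props hpi h1 h2 h3 va vb V).1; rewrite inv.
    exact: (sig_props hpi h1 h2 h3 va vb V).1.
  move=> /asboolP V.
  have V' : inE_Lambda pi F by have := (sig_props hpi h1 h2 h3 va vb V).1; rewrite inv.
  exact: (sig_props hpi h1 h2 h3 va vb V').2.
lia.
Qed.
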